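(* For real $\alpha>0$ and $\beta>0$ define $$f(\alpha,\beta)=\sum_{n=-\infty}^{\infty}\frac{\alpha(-1)^n}{\sqrt{\alpha^2n^2+\alpha\beta^2}\,\sinh\!\left(\pi\sqrt{\alpha^2n^2+\alpha\beta^2}\right)}.$$ Then $f(\alpha,\beta)=f(1/\alpha,\beta)$.
   Context: The series converges absolutely. *)

(* Defs.v *)
From Stdlib Require Import Reals ZArith.
Open Scope R_scope.

Definition fterm (alpha beta : R) (n : Z) : R :=
  let s := sqrt (alpha ^ 2 * (IZR n) ^ 2 + alpha * beta ^ 2) in
  alpha * (-1) ^ (Z.abs_nat n) / (s * sinh (PI * s)).

Fixpoint symsum (g : Z -> R) (N : nat) : R :=
  match N with
  | O => g 0%Z
  | S m => symsum g m + g (Z.of_nat (S m)) + g (- Z.of_nat (S m))%Z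
  end.

(* The bilateral series sum_{n in Z} g n converges (symmetrically) to l.
   (The series in question converges absolutely, so symmetric summation
   gives its value.) *)
Definition bilateral_sum (g : Z -> R) (l : R) : Prop :=
  Un_cv (symsum g) l.

(* Main.v *)
Require Import Defs.
From Stdlib Require Import Reals ZArith Lra Lia.
From Coquelicot Require Import Coquelicot.
Open Scope R_scope.

Lemma sin_nPI (n : nat) : sin (INR n * PI) = 0.
Proof.
  induction n as [|n IH]. simpl. rewrite Rmult_0_l. apply sin_0.
  rewrite S_INR, Rmult_plus_distr_r, Rmult_1_l, neg_sin, IH. lra.
Qed.

Lemma cos_nPI (n : nat) : cos (INR n * PI) = (-1) ^ n.
Proof.
  induction n as [|n IH]. simpl. rewrite Rmult_0_l. apply cos_0.
  rewrite S_INR, Rmult_plus_distr_r, Rmult_1_l, neg_cos, IH. simpl; ring.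
Qed.

Lemma cont_of_der (f : R -> R) x : ex_derive f x -> @continuous R_UniformSpace R_UniformSpace f x.
Proof. intro H. exact (ex_derive_continuous f x H). Qed.

Lemma c_int (s : R) (m : nat) : 0 < s ->
  is_RInt (fun x => cosh (s * x) * cos (INR m * x)) 0 PI
    (s * (-1) ^ m * sinh (s * PI) / (s ^ 2 + INR m ^ 2)).
Proof.
  intros Hs.
  assert (Hd : s ^ 2 + INR m ^ 2 <> 0) by (pose proof (pos_INR m); nra).
  set (F := fun x => (s * sinh (s * x) * cos (INR m * x) + INR m * cosh (s * x) * sin (INR m * x)) / (s ^ 2 + INR m ^ 2)).
  replace (s * (-1) ^ m * sinh (s * PI) / (s ^ 2 + INR m ^ 2)) with (minus (F PI) (F 0)).
  2:{ unfold F, minus, plus, opp; simpl. rewrite !Rmult_0_r, sinh_0, sin_0, sin_nPI, cos_nPI. field. pose proof (pos_INR m); nra. }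
  apply (@is_RInt_derive R_CompleteNormedModule F).
  - intros y _. unfold F, sinh, cosh. auto_derive. auto.
    field. pose proof (pos_INR m); nra.
  - intros z _. apply cont_of_der. unfold cosh. auto_derive. auto.
Qed.

Lemma isR_plus (f g : R -> R) a b If Ig : is_RInt f a b If -> is_RInt g a b Ig ->
  is_RInt (fun x => f x + g x) a b (If + Ig).
Proof. intros H1 H2. exact (is_RInt_plus f g a b If Ig H1 H2). Qed.
Lemma isR_minus (f g : R -> R) a b If Ig : is_RInt f a b If -> is_RInt g a b Ig ->
  is_RInt (fun x => f x - g x) a b (If - Ig).
Proof. intros H1 H2. exact (is_RInt_minus f g a b If Ig H1 H2). Qed.
Lemma isR_scal (f : R -> R) a b k If : is_RInt f a b If ->
  is_RInt (fun x => k * f x) a b (k * If).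
Proof. intros H1. exact (is_RInt_scal f a b k If H1). Qed.
Lemma isR_ext (f g : R -> R) a b (l l' : R) : (forall x, f x = g x) -> l = l' ->
  is_RInt f a b l -> is_RInt g a b l'.
Proof. intros H1 H2 H3. subst l'. apply (is_RInt_ext f g); auto. Qed.

Fixpoint ssum (t : nat -> R) (N : nat) : R :=
  match N with O => 0 | S n => ssum t n + t (S n) end.

Lemma ssum_S t n : ssum t (S n) = ssum t n + t (S n).
Proof. reflexivity. Qed.

Lemma cos_int (m : nat) : (1 <= m)%nat -> is_RInt (fun x => cos (INR m * x)) 0 PI 0.
Proof.
  intros Hm. assert (HmR : 1 <= INR m) by (apply (le_INR 1); auto).
  set (F := fun x => sin (INR m * x) / INR m).
  apply isR_ext with (f := fun x => cos (INR m * x)) (l := minus (F PI) (F 0)). reflexivity.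
  { unfold F, minus, plus, opp; simpl. rewrite Rmult_0_r, sin_0, sin_nPI. field. lra. }
  apply (@is_RInt_derive R_CompleteNormedModule F).
  - intros y _. unfold F. auto_derive. auto. field. lra.
  - intros z _. apply cont_of_der. auto_derive. auto.
Qed.

Definition U (r : R) (M : nat) (x : R) := 1 + 2 * ssum (fun m => r ^ m * cos (INR m * x)) M.
Definition Sr (s r : R) (M : nat) := 1 / s ^ 2 + 2 * ssum (fun m => r ^ m * (-1) ^ m / (s ^ 2 + INR m ^ 2)) M.

Lemma U1_int r M : is_RInt (U r M) 0 PI PI.
Proof.
  induction M as [|M IH].
  - eapply isR_ext; [| | apply (@is_RInt_const R_NormedModule 0 PI 1)].
    intro x; unfold U; simpl. ring. exact (eq_trans (eq_refl ((PI - 0) * 1)) ltac:(ring)).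
  - eapply isR_ext; [| | apply (isR_plus _ _ _ _ _ _ IH (isR_scal _ _ _ (2 * r ^ S M) _ (cos_int (S M) ltac:(lia))))].
    intro x; unfold U; rewrite ssum_S. ring. rewrite Rmult_0_r, Rplus_0_r; reflexivity.
Qed.

Lemma U_int s r M : 0 < s -> is_RInt (fun x => cosh (s * x) * U r M x) 0 PI (s * sinh (s * PI) * Sr s r M).
Proof.
  intros Hs. induction M as [|M IH].
  - eapply isR_ext; [| | apply (c_int s 0 Hs)].
    intro x; unfold U; simpl; ring_simplify. rewrite Rmult_0_l, cos_0; ring.
    unfold Sr; simpl. field. lra.
  - eapply isR_ext; [| | apply (isR_plus _ _ _ _ _ _ IH (isR_scal _ _ _ (2 * r ^ S M) _ (c_int s (S M) Hs)))].
    intro x; unfold U; rewrite ssum_S; ring.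
    unfold Sr; rewrite ssum_S. field. pose proof (pos_INR (S M)); split; nra.
Qed.

Lemma U_closed r M x : (1 - 2 * r * cos x + r ^ 2) * U r M x =
  1 - r ^ 2 - 2 * r ^ (S M) * cos (INR (S M) * x) + 2 * r ^ (S (S M)) * cos (INR M * x).
Proof.
  induction M as [|M IH].
  - unfold U; simpl. rewrite Rmult_0_l, cos_0, Rmult_1_l. ring.
  - unfold U in *; rewrite ssum_S.
    transitivity ((1 - 2 * r * cos x + r ^ 2) * (1 + 2 * ssum (fun m : nat => r ^ m * cos (INR m * x)) M)
       + (1 - 2 * r * cos x + r ^ 2) * 2 * (r ^ S M * cos (INR (S M) * x))). ring.
    rewrite IH.
    assert (E : cos (INR (S (S M)) * x) + cos (INR M * x) = 2 * cos x * cos (INR (S M) * x)).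
    { replace (INR (S (S M)) * x) with (INR (S M) * x + x) by (rewrite (S_INR (S M)); ring).
      replace (INR M * x) with (INR (S M) * x - x) by (rewrite (S_INR M); ring).
      rewrite cos_plus, cos_minus. ring. }
    replace (cos (INR (S (S M)) * x)) with (2 * cos x * cos (INR (S M) * x) - cos (INR M * x)) by lra.
    simpl pow. ring.
Qed.

Lemma cosh_mono a b : 0 <= a <= b -> cosh a <= cosh b.
Proof.
  intros [Ha Hab]. unfold cosh. rewrite !exp_Ropp.
  assert (Hu : 1 <= exp a). { rewrite <- exp_0. destruct Ha as [Ha|Ha]. left; apply exp_increasing; auto. subst; lra. }
  assert (Huv : exp a <= exp b). { destruct Hab as [H|H]. left; apply exp_increasing; auto. subst; lra. }
  assert (Hi : exp a * / exp a = 1) by (field; lra).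
  assert (Hj : exp b * / exp b = 1) by (field; lra).
  assert (0 < / exp a) by (apply Rinv_0_lt_compat; lra).
  assert (0 < / exp b) by (apply Rinv_0_lt_compat; lra).
  assert (/ exp a <= 1) by nra. assert (/ exp b <= 1) by nra.
  assert (Hd : / exp a - / exp b = / exp a * / exp b * (exp b - exp a)).
  { field. split; lra. }
  assert (/ exp a * / exp b <= 1) by nra.
  nra.
Qed.

Lemma sinh_mono a b : a <= b -> sinh a <= sinh b.
Proof. intros [H|H]. left; apply sinh_lt; auto. subst; lra. Qed.

Lemma sinh_nonneg a : 0 <= a -> 0 <= sinh a.
Proof. intros H. rewrite <- sinh_0. apply sinh_mono; auto. Qed.

Lemma cosh_pos a : 1 <= cosh a.
Proof.
  unfold cosh. pose proof (exp_pos a). pose proof (exp_pos (-a)).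
  assert (exp a * exp (- a) = 1) by (rewrite <- exp_plus; replace (a + - a) with 0 by ring; apply exp_0).
  assert (0 <= (exp a - exp (-a)) ^ 2) by apply pow2_ge_0.
  assert (4 <= (exp a + exp (-a)) ^ 2) by nra.
  nra.
Qed.

Lemma is_derive_sinh x : is_derive sinh x (cosh x).
Proof. apply is_derive_Reals. apply derivable_pt_lim_sinh. Qed.
Lemma is_derive_cosh x : is_derive cosh x (sinh x).
Proof. apply is_derive_Reals. apply derivable_pt_lim_cosh. Qed.

Lemma cont_sinh x : @continuous R_UniformSpace R_UniformSpace sinh x.
Proof. apply cont_of_der. eexists. apply is_derive_sinh. Qed.
Lemma cont_cosh x : @continuous R_UniformSpace R_UniformSpace cosh x.
Proof. apply cont_of_der. eexists. apply is_derive_cosh. Qed.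

Lemma int_bound (f F : R -> R) (y B : R) : 0 <= y ->
  (forall x, is_derive F x (f x)) -> (forall x, @continuous R_UniformSpace R_UniformSpace f x) ->
  (forall t, 0 <= t <= y -> Rabs (f t) <= B) -> Rabs (F y - F 0) <= y * B.
Proof.
  intros Hy Hd Hc Hb.
  assert (H : is_RInt f 0 y (minus (F y) (F 0))).
  { apply (@is_RInt_derive R_CompleteNormedModule F). intros; apply Hd. intros; apply Hc. }
  assert (HR := is_RInt_unique _ _ _ _ H).
  pose proof (abs_RInt_le_const f 0 y B Hy (ex_intro _ _ H) Hb) as K.
  rewrite HR in K. unfold minus, plus, opp in K; simpl in K. replace (y * B) with ((y - 0) * B) by ring. exact K.
Qed.

Lemma sinh_le y : 0 <= y -> sinh y <= y * cosh y.
Proof.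
  intros Hy. pose proof (int_bound cosh sinh y (cosh y) Hy is_derive_sinh cont_cosh) as K.
  assert (sinh y - sinh 0 <= y * cosh y).
  { eapply Rle_trans; [apply Rle_abs|]. apply K. intros t Ht.
    rewrite Rabs_pos_eq. apply cosh_mono; lra. pose proof (cosh_pos t); lra. }
  rewrite sinh_0 in H; lra.
Qed.

Lemma cosh_le y : 0 <= y -> cosh y - 1 <= y * sinh y.
Proof.
  intros Hy. pose proof (int_bound sinh cosh y (sinh y) Hy is_derive_cosh cont_sinh) as K.
  assert (cosh y - cosh 0 <= y * sinh y).
  { eapply Rle_trans; [apply Rle_abs|]. apply K. intros t Ht.
    rewrite Rabs_pos_eq. apply sinh_mono; lra. apply sinh_nonneg; lra. }
  replace (cosh 0) with 1 in H. lra. unfold cosh. rewrite Ropp_0, exp_0. field.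
Qed.

Lemma cosh_sq y : 0 <= y -> cosh y - 1 <= y ^ 2 * cosh y.
Proof.
  intros Hy. pose proof (cosh_le y Hy). pose proof (sinh_le y Hy). nra.
Qed.

Lemma cos_quad x : 0 <= x <= PI -> x ^ 2 <= 16 * (1 - cos x).
Proof.
  intros [H0 H1]. pose proof PI_4. pose proof PI_RGT_0.
  destruct (Rle_lt_dec x (PI / 2)) as [Hx|Hx].
  - destruct (cos_bound x 0) as [_ Hc]; [lra|lra|].
    unfold cos_approx in Hc. simpl in Hc. unfold cos_term in Hc. simpl in Hc.
    assert (x <= 2) by lra.
    assert (Hc2 : cos x <= 1 - x^2/2 + x^4/24) by (eapply Rle_trans;[exact Hc| right; field]).
    assert (x^2 <= 4) by (simpl; nra).
    assert (0 <= x^2) by (simpl; nra).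
    assert (x^4 <= 4 * x^2) by (replace (x^4) with (x^2*x^2) by ring; apply Rmult_le_compat_r; lra).
    lra.
  - assert (cos x <= 0) by (apply cos_le_0; lra). nra.
Qed.

Lemma div_lt (a b : R) : 0 < b -> a < b -> a / b < 1.
Proof. intros. apply Rmult_lt_reg_r with b; auto. replace (a / b * b) with a by (field; lra). lra. Qed.

Lemma div_le (a b c : R) : 0 < b -> a <= c * b -> a / b <= c.
Proof.
  intros Hb H. apply Rmult_le_reg_r with b; auto.
  replace (a / b * b) with a by (field; lra). lra.
Qed.

Lemma pt_bound s r M x : 0 < s -> 0 < r < 1 -> 0 <= x <= PI ->
  Rabs ((cosh (s * x) - 1) * U r M x) <=
  16 * s ^ 2 * cosh (s * PI) * (1 - r ^ 2) / (2 * r) + cosh (s * PI) * (4 * r ^ (S M)) / (1 - r) ^ 2.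
Proof.
  intros Hs Hr Hx.
  set (D := 1 - 2 * r * cos x + r ^ 2).
  set (E := - 2 * r ^ (S M) * cos (INR (S M) * x) + 2 * r ^ (S (S M)) * cos (INR M * x)).
  pose proof (COS_bound x) as Hcx.
  assert (HD1 : (1 - r) ^ 2 <= D) by (unfold D; nra).
  assert (HD2 : 2 * r * (1 - cos x) <= D) by (unfold D; nra).
  assert (Hr2 : 0 < (1 - r) ^ 2) by (apply pow_lt; lra).
  assert (HDp : 0 < D) by lra.
  assert (HU : U r M x = ((1 - r ^ 2) + E) / D).
  { apply (Rmult_eq_reg_l D); [|lra]. unfold D at 1. rewrite U_closed. unfold E. field. lra. }
  set (c := cosh (s * x) - 1).
  assert (Hc0 : 0 <= c) by (unfold c; pose proof (cosh_pos (s * x)); lra).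
  assert (Hsx : 0 <= s * x <= s * PI) by (split; nra).
  assert (Hc1 : c <= cosh (s * PI)) by (unfold c; pose proof (cosh_mono (s*x) (s*PI) Hsx); lra).
  assert (Hc2 : c <= 16 * s ^ 2 * cosh (s * PI) * (1 - cos x)).
  { unfold c. eapply Rle_trans. apply cosh_sq. lra.
    pose proof (cos_quad x Hx). pose proof (cosh_mono (s*x) (s*PI) Hsx). pose proof (cosh_pos (s * x)).
    replace ((s * x) ^ 2) with (s ^ 2 * x ^ 2) by ring.
    assert (0 <= s ^ 2) by (simpl; nra). assert (0 <= x^2) by (simpl; nra).
    apply Rle_trans with (s ^ 2 * x ^ 2 * cosh (s * PI)).
    apply Rmult_le_compat_l; nra.
    replace (16 * s ^ 2 * cosh (s * PI) * (1 - cos x)) with (s ^ 2 * (16 * (1 - cos x)) * cosh (s * PI)) by ring.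
    apply Rmult_le_compat_r. lra. apply Rmult_le_compat_l; lra. }
  assert (HE : Rabs E <= 4 * r ^ (S M)).
  { unfold E. pose proof (COS_bound (INR (S M) * x)). pose proof (COS_bound (INR M * x)).
    assert (0 < r ^ S M) by (apply pow_lt; lra).
    assert (r ^ S (S M) <= r ^ S M) by (simpl; simpl in H1; nra).
    assert (0 < r ^ S (S M)) by (apply pow_lt; lra).
    apply Rabs_le. split; nra. }
  rewrite HU.
  replace (c * ((1 - r ^ 2 + E) / D)) with (c * (1 - r ^ 2) / D + c * E / D) by (field; lra).
  eapply Rle_trans. apply Rabs_triang. apply Rplus_le_compat.
  - rewrite Rabs_pos_eq.
    + apply div_le. lra.
      assert (0 <= 1 - r^2) by (simpl; nra).
      replace (16 * s ^ 2 * cosh (s * PI) * (1 - r ^ 2) / (2 * r) * D)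
        with ((1 - r ^ 2) * (16 * s ^ 2 * cosh (s * PI) * (D / (2 * r)))) by (field; lra).
      replace (c * (1 - r ^ 2)) with ((1 - r^2) * c) by ring.
      apply Rmult_le_compat_l. lra.
      eapply Rle_trans. exact Hc2.
      apply Rmult_le_compat_l. pose proof (cosh_pos (s*PI)). assert (0 <= s^2) by (simpl; nra). nra.
      apply Rmult_le_reg_r with (2 * r). lra. replace (D / (2 * r) * (2 * r)) with D by (field; lra). lra.
    + unfold Rdiv. apply Rmult_le_pos. apply Rmult_le_pos. lra. simpl; nra. left; apply Rinv_0_lt_compat; lra.
  - unfold Rdiv. rewrite Rabs_mult, Rabs_mult, (Rabs_pos_eq c), (Rabs_pos_eq (/ D)); auto.
    2:{ left; apply Rinv_0_lt_compat; lra. }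
    apply Rle_trans with (cosh (s * PI) * (4 * r ^ S M) * / D).
    { apply Rmult_le_compat_r. left; apply Rinv_0_lt_compat; lra.
      apply Rmult_le_compat; auto. apply Rabs_pos. }
    apply Rmult_le_compat_l. pose proof (cosh_pos (s*PI)). assert (0 < r ^ S M) by (apply pow_lt; lra). nra.
    apply Rinv_le_contravar; lra.
Qed.

Lemma Sr_bound s r M : 0 < s -> 0 < r < 1 ->
  Rabs (s * sinh (s * PI) * Sr s r M - PI) <=
  PI * (16 * s ^ 2 * cosh (s * PI) * (1 - r ^ 2) / (2 * r) + cosh (s * PI) * (4 * r ^ (S M)) / (1 - r) ^ 2).
Proof.
  intros Hs Hr.
  pose proof (isR_minus _ _ _ _ _ _ (U_int s r M Hs) (U1_int r M)) as H.
  assert (H' : is_RInt (fun x => (cosh (s * x) - 1) * U r M x) 0 PI (s * sinh (s * PI) * Sr s r M - PI)).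
  { eapply isR_ext; [| | exact H]. intro; simpl; ring. reflexivity. }
  assert (HR := is_RInt_unique _ _ _ _ H').
  pose proof PI_RGT_0.
  pose proof (abs_RInt_le_const (fun x => (cosh (s * x) - 1) * U r M x) 0 PI
   (16 * s ^ 2 * cosh (s * PI) * (1 - r ^ 2) / (2 * r) + cosh (s * PI) * (4 * r ^ (S M)) / (1 - r) ^ 2) ltac:(lra) (ex_intro _ _ H')) as K.
  rewrite HR, Rminus_0_r in K. apply K.
  intros t Ht. apply pt_bound; auto.
Qed.

Lemma ssum_minus f g N : ssum (fun m => f m - g m) N = ssum f N - ssum g N.
Proof. induction N; simpl; [ring| rewrite IHN; ring]. Qed.

Lemma ssum_abs f g N : (forall m, (1 <= m)%nat -> Rabs (f m) <= g m) -> Rabs (ssum f N) <= ssum g N.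
Proof.
  intros H. induction N. simpl. rewrite Rabs_R0; lra. rewrite !ssum_S.
  eapply Rle_trans. apply Rabs_triang. apply Rplus_le_compat; auto. apply H; lia.
Qed.

Lemma ssum_le_lin (t : nat -> R) a J : (forall n, (1 <= n <= J)%nat -> t n <= a) ->
  forall N, (N <= J)%nat -> ssum t N <= a * INR N.
Proof.
  intros H N. induction N; intros HN. simpl; lra.
  rewrite ssum_S, S_INR. assert (t (S N) <= a) by (apply H; lia). specialize (IHN ltac:(lia)). lra.
Qed.

Lemma ssum_tail (t : nat -> R) b J : (1 <= J)%nat -> 0 <= b ->
  (forall n, (J < n)%nat -> t n <= b / INR n ^ 2) ->
  forall q, ssum t (J + q) <= ssum t J + b * (1 / INR J - 1 / INR (J + q)).
Proof.
  intros HJ Hb H q. induction q.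
  - rewrite Nat.add_0_r. lra.
  - rewrite Nat.add_succ_r, ssum_S. 
    assert (HJR : 1 <= INR (J + q)) by (apply (le_INR 1); lia).
    assert (Ht : t (S (J + q)) <= b / INR (S (J + q)) ^ 2) by (apply H; lia).
    rewrite S_INR in *.
    assert (b / (INR (J + q) + 1) ^ 2 <= b * (1 / INR (J + q) - 1 / (INR (J + q) + 1))).
    { replace (b * (1 / INR (J + q) - 1 / (INR (J + q) + 1))) with (b / (INR (J + q) * (INR (J+q) + 1))) by (field; lra).
      unfold Rdiv. apply Rmult_le_compat_l; auto. apply Rinv_le_contravar. nra. simpl; nra. }
    lra.
Qed.

Lemma ssum_split (t : nat -> R) a b J : (1 <= J)%nat -> 0 <= a -> 0 <= b ->
  (forall n, (1 <= n <= J)%nat -> t n <= a) ->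
  (forall n, (J < n)%nat -> t n <= b / INR n ^ 2) ->
  forall N, ssum t N <= a * INR J + b / INR J.
Proof.
  intros HJ Ha Hb H1 H2 N.
  assert (HJR : 1 <= INR J) by (apply (le_INR 1); lia).
  assert (0 <= b / INR J) by (unfold Rdiv; apply Rmult_le_pos; auto; left; apply Rinv_0_lt_compat; lra).
  destruct (le_lt_dec N J) as [HN|HN].
  - pose proof (ssum_le_lin t a J H1 N HN). pose proof (le_INR _ _ HN). nra.
  - replace N with (J + (N - J))%nat by lia.
    pose proof (ssum_tail t b J HJ Hb H2 (N - J)).
    pose proof (ssum_le_lin t a J H1 J (le_n _)).
    assert (0 <= b * (1 / INR (J + (N - J)))).
    { apply Rmult_le_pos; auto. unfold Rdiv; rewrite Rmult_1_l. left; apply Rinv_0_lt_compat.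
      apply lt_0_INR; lia. }
    assert (b * (1 / INR J - 1 / INR (J + (N - J))) = b / INR J - b * (1 / INR (J + (N - J)))) by (field; split; [apply not_0_INR; lia| lra]).
    lra.
Qed.

Lemma bernoulli r m : 0 <= r <= 1 -> 1 - r ^ m <= INR m * (1 - r).
Proof.
  intros Hr. induction m. simpl; lra.
  rewrite S_INR. simpl. assert (r ^ m <= 1) by (rewrite <- (pow1 m); apply pow_incr; lra). nra.
Qed.

Lemma symsum_S g m : symsum g (S m) = symsum g m + g (Z.of_nat (S m)) + g (- Z.of_nat (S m))%Z.
Proof. reflexivity. Qed.

Lemma symsum_even (h : Z -> R) N : (forall n, h (- n)%Z = h n) ->
  symsum h N = h 0%Z + 2 * ssum (fun n => h (Z.of_nat n)) N.
Proof.
  intros He. induction N. simpl; ring. rewrite symsum_S.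
  rewrite IHN, He, ssum_S. ring.
Qed.

Lemma ssum_ext f g N : (forall m, f m = g m) -> ssum f N = ssum g N.
Proof. intros H. induction N. reflexivity. rewrite !ssum_S, IHN, H; reflexivity. Qed.

Definition gP (A : R) (m : Z) : R := (-1) ^ (Z.abs_nat m) / (A + IZR m ^ 2).

Lemma abs_nat_opp n : Z.abs_nat (- n) = Z.abs_nat n.
Proof. destruct n; reflexivity. Qed.

Lemma gP_even A n : gP A (- n) = gP A n.
Proof. unfold gP. rewrite abs_nat_opp, opp_IZR. f_equal. f_equal. ring. Qed.

Lemma symsum_Sr s M : 0 < s -> symsum (gP (s ^ 2)) M = Sr s 1 M.
Proof.
  intros Hs. rewrite symsum_even by apply gP_even.
  unfold Sr. f_equal.
  - unfold gP. simpl. field. lra.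
  - f_equal. apply ssum_ext. intro m. unfold gP. rewrite Zabs2Nat.id, <- INR_IZR_INZ, pow1. unfold Rdiv; rewrite Rmult_1_l; reflexivity.
Qed.

Lemma P_bound s r J M : 0 < s -> 0 < r < 1 -> (1 <= J)%nat ->
  Rabs (Sr s 1 M - PI / (s * sinh (s * PI))) <=
  2 * ((1 - r) * INR J + 1 / INR J) +
  PI / (s * sinh (s * PI)) * (16 * s ^ 2 * cosh (s * PI) * (1 - r ^ 2) / (2 * r) + cosh (s * PI) * (4 * r ^ (S M)) / (1 - r) ^ 2).
Proof.
  intros Hs Hr HJ.
  assert (HK : 0 < s * sinh (s * PI)).
  { apply Rmult_lt_0_compat; auto. rewrite <- sinh_0. apply sinh_lt. pose proof PI_RGT_0. nra. }
  set (K := s * sinh (s * PI)) in *.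
  replace (Sr s 1 M - PI / K) with ((Sr s 1 M - Sr s r M) + (K * Sr s r M - PI) / K) by (field; lra).
  eapply Rle_trans. apply Rabs_triang. apply Rplus_le_compat.
  - unfold Sr. replace (1 / s ^ 2 + 2 * ssum (fun m : nat => 1 ^ m * (-1) ^ m / (s ^ 2 + INR m ^ 2)) M -
       (1 / s ^ 2 + 2 * ssum (fun m : nat => r ^ m * (-1) ^ m / (s ^ 2 + INR m ^ 2)) M))
      with (2 * ssum (fun m => (1 ^ m * (-1) ^ m / (s ^ 2 + INR m ^ 2)) - (r ^ m * (-1) ^ m / (s ^ 2 + INR m ^ 2))) M)
      by (rewrite ssum_minus; ring).
    rewrite Rabs_mult, (Rabs_pos_eq 2) by lra. apply Rmult_le_compat_l. lra.
    eapply Rle_trans. apply (ssum_abs _ (fun m => (1 - r ^ m) / (s ^ 2 + INR m ^ 2))).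
    + intros m Hm. assert (0 < s ^ 2 + INR m ^ 2) by (pose proof (pos_INR m); simpl; nra).
      replace (1 ^ m * (-1) ^ m / (s ^ 2 + INR m ^ 2) - r ^ m * (-1) ^ m / (s ^ 2 + INR m ^ 2))
        with ((-1) ^ m * ((1 - r ^ m) / (s ^ 2 + INR m ^ 2))) by (rewrite pow1; field; lra).
      rewrite Rabs_mult, pow_1_abs, Rmult_1_l. apply Req_le, Rabs_pos_eq.
      unfold Rdiv. apply Rmult_le_pos. assert (r ^ m <= 1) by (rewrite <- (pow1 m); apply pow_incr; lra). lra.
      left; apply Rinv_0_lt_compat; auto.
    + apply ssum_split; auto; try lra.
      * intros n Hn. assert (HnR : 1 <= INR n) by (apply (le_INR 1); lia).
        pose proof (bernoulli r n ltac:(lra)).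
        assert (INR n <= s ^ 2 + INR n ^ 2) by (simpl; nra). apply div_le. simpl; nra. nra.
      * intros n Hn. assert (HnR : 1 <= INR n) by (apply (le_INR 1); lia).
        assert (0 <= r ^ n) by (apply pow_le; lra). assert (r ^ n <= 1) by (rewrite <- (pow1 n); apply pow_incr; lra).
        unfold Rdiv. apply Rmult_le_compat. lra. left; apply Rinv_0_lt_compat; simpl; nra. lra.
        apply Rinv_le_contravar. simpl; nra. simpl; nra.
  - rewrite Rabs_div by lra. rewrite (Rabs_pos_eq K) by lra.
    pose proof (Sr_bound s r M Hs Hr) as B. fold K in B.
    match goal with |- _ <= PI / K * ?X => replace (PI / K * X) with ((PI * X) * / K) by (field; lra) end.
    unfold Rdiv. apply Rmult_le_compat_r. left; apply Rinv_0_lt_compat; lra. exact B.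
Qed.

Theorem P_cv A : 0 < A -> Un_cv (symsum (gP A)) (PI / (sqrt A * sinh (PI * sqrt A))).
Proof.
  intros HA. set (s := sqrt A). assert (Hs : 0 < s) by (apply sqrt_lt_R0; auto).
  assert (HAs : A = s ^ 2) by (unfold s; rewrite pow2_sqrt; lra).
  rewrite HAs, (Rmult_comm PI s).
  assert (HK : 0 < s * sinh (s * PI)).
  { apply Rmult_lt_0_compat; auto. rewrite <- sinh_0. apply sinh_lt. pose proof PI_RGT_0. nra. }
  set (K := s * sinh (s * PI)) in *.
  pose proof PI_RGT_0 as Hpi. pose proof (cosh_pos (s * PI)) as Hch.
  assert (HpK : 0 < PI / K) by (unfold Rdiv; apply Rmult_lt_0_compat; auto; apply Rinv_0_lt_compat; auto).
  set (Q := PI / K * (16 * s ^ 2 * cosh (s * PI))).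
  assert (HQ : 0 <= Q) by (unfold Q; assert (0 <= s^2) by (simpl; nra); apply Rmult_le_pos; nra).
  set (Q2 := PI / K * (cosh (s * PI) * 4)).
  assert (HQ2 : 0 <= Q2) by (unfold Q2; nra).
  intros eps Heps.
  destruct (archimed_cor1 (eps / 16) ltac:(lra)) as [J [HJ1 HJ2]].
  assert (HJR : 1 <= INR J) by (apply (le_INR 1); lia).
  set (T := INR J + Q + 1). assert (HT : 0 < T) by (unfold T; lra).
  set (e' := eps / (16 * T)). assert (He' : 0 < e') by (unfold e'; apply Rdiv_lt_0_compat; lra).
  assert (He'T : e' * T = eps / 16) by (unfold e'; field; lra).
  set (d := Rmin (1/2) e').
  assert (Hd1 : d <= 1/2) by apply Rmin_l. assert (Hd2 : d <= e') by apply Rmin_r.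
  assert (Hd0 : 0 < d) by (unfold d; apply Rmin_glb_lt; lra).
  set (r := 1 - d). assert (Hr : 0 < r < 1) by (unfold r; lra).
  set (y := eps * d ^ 2 / (8 * (Q2 + 1))).
  assert (Hy : 0 < y) by (unfold y; apply Rdiv_lt_0_compat; [apply Rmult_lt_0_compat; auto; apply pow_lt; lra | lra]).
  destruct (pow_lt_1_zero r ltac:(rewrite Rabs_pos_eq; lra) y Hy) as [M0 HM0].
  exists M0. intros M HM. unfold R_dist. rewrite symsum_Sr by auto.
  eapply Rle_lt_trans. apply (P_bound s r J M Hs Hr ltac:(lia)). fold K.
  assert (h1 : 2 * ((1 - r) * INR J) <= eps / 8).
  { replace (1 - r) with d by (unfold r; ring). assert (d * INR J <= e' * INR J) by (apply Rmult_le_compat_r; lra). assert (e' * INR J <= e' * T) by (apply Rmult_le_compat_l; unfold T; lra). lra. }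
  assert (h2 : 2 * (1 / INR J) < eps / 8).
  { unfold Rdiv at 1. rewrite Rmult_1_l. lra. }
  assert (h3 : PI / K * (16 * s ^ 2 * cosh (s * PI) * (1 - r ^ 2) / (2 * r)) <= eps / 8).
  { replace (PI / K * (16 * s ^ 2 * cosh (s * PI) * (1 - r ^ 2) / (2 * r))) with (Q * ((1 - r ^ 2) / (2 * r)))
      by (unfold Q; field; lra).
    assert (Hrr : (1 - r ^ 2) / (2 * r) <= 2 * d).
    { apply div_le. lra. unfold r; simpl. nra. }
    assert (Q * ((1 - r ^ 2) / (2 * r)) <= Q * (2 * d)) by (apply Rmult_le_compat_l; auto).
    assert (Q <= T) by (unfold T; lra). nra. }
  assert (h4 : PI / K * (cosh (s * PI) * (4 * r ^ S M) / (1 - r) ^ 2) < eps / 8).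
  { replace (PI / K * (cosh (s * PI) * (4 * r ^ S M) / (1 - r) ^ 2)) with (Q2 * r ^ S M / d ^ 2)
      by (unfold Q2, r; field; split; lra).
    specialize (HM0 (S M) ltac:(lia)). rewrite Rabs_pos_eq in HM0 by (apply pow_le; lra).
    assert (Hd2p : 0 < d ^ 2) by (apply pow_lt; lra).
    apply Rle_lt_trans with (Q2 * y / d ^ 2).
    { unfold Rdiv. apply Rmult_le_compat_r. left; apply Rinv_0_lt_compat; auto. apply Rmult_le_compat_l; lra. }
    unfold y. replace (Q2 * (eps * d ^ 2 / (8 * (Q2 + 1))) / d ^ 2) with ((Q2 / (Q2 + 1)) * (eps / 8)) by (field; lra).
    assert (Q2 / (Q2 + 1) < 1) by (apply div_lt; lra). nra. }
  rewrite Rmult_plus_distr_l. lra.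
Qed.

Lemma symsum_S' g m : symsum g (S m) = symsum g m + g (Z.of_nat (S m)) + g (- Z.of_nat (S m))%Z.
Proof. reflexivity. Qed.

Lemma symsum_ext f g N : (forall n, f n = g n) -> symsum f N = symsum g N.
Proof. intros H. induction N. simpl; auto. rewrite !symsum_S', IHN, !H. reflexivity. Qed.

Lemma symsum_plus f g N : symsum (fun n => f n + g n) N = symsum f N + symsum g N.
Proof. induction N. simpl; ring. rewrite !symsum_S', IHN. ring. Qed.

Lemma symsum_minus f g N : symsum (fun n => f n - g n) N = symsum f N - symsum g N.
Proof. induction N. simpl; ring. rewrite !symsum_S', IHN. ring. Qed.

Lemma symsum_scal c f N : symsum (fun n => c * f n) N = c * symsum f N.
Proof. induction N. simpl; ring. rewrite !symsum_S', IHN. ring. Qed.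

Lemma symsum_abs f h N : (forall n, Rabs (f n) <= h n) -> Rabs (symsum f N) <= symsum h N.
Proof.
  intros H. induction N. simpl; apply H. rewrite !symsum_S'.
  eapply Rle_trans. apply Rabs_triang. apply Rplus_le_compat; [|apply H].
  eapply Rle_trans. apply Rabs_triang. apply Rplus_le_compat; [auto|apply H].
Qed.

Lemma symsum_swap (g : Z -> Z -> R) N M :
  symsum (fun n => symsum (fun m => g n m) M) N = symsum (fun m => symsum (fun n => g n m) N) M.
Proof.
  induction N. simpl. reflexivity.
  rewrite symsum_S', IHN.
  rewrite (symsum_ext (fun m => symsum (fun n => g n m) (S N))
     (fun m => (symsum (fun n => g n m) N + g (Z.of_nat (S N)) m) + g (- Z.of_nat (S N))%Z m)).
  2:{ intro; apply symsum_S'. }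
  rewrite !symsum_plus. reflexivity.
Qed.

Lemma symsum_lim (u : Z -> nat -> R) (l : Z -> R) N :
  (forall n, Un_cv (u n) (l n)) -> Un_cv (fun M => symsum (fun n => u n M) N) (symsum l N).
Proof.
  intros H. induction N. simpl. apply H.
  rewrite symsum_S'. apply CV_plus. apply CV_plus. apply IHN. apply H. apply H.
Qed.

Lemma lim_le (u : nat -> R) l e N0 : Un_cv u l -> (forall n, (N0 <= n)%nat -> Rabs (u n) <= e) -> Rabs l <= e.
Proof.
  intros Hu Hb. destruct (Rle_lt_dec (Rabs l) e) as [H|H]; auto.
  destruct (Hu (Rabs l - e) ltac:(lra)) as [N HN].
  specialize (HN (max N N0) ltac:(lia)). specialize (Hb (max N N0) ltac:(lia)).
  unfold R_dist in HN. pose proof (Rabs_triang_inv l (u (max N N0))).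
  rewrite <- Rabs_Ropp in HN. replace (- (u (max N N0) - l)) with (l - u (max N N0)) in HN by ring. lra.
Qed.

Lemma moore_osgood (T : nat -> nat -> R) (a b eps : nat -> R) :
  (forall N, Un_cv (fun M => T N M) (a N)) -> (forall M, Un_cv (fun N => T N M) (b M)) ->
  Un_cv eps 0 -> (forall N M M', (M <= M')%nat -> Rabs (T N M' - T N M) <= eps M) ->
  exists L, Un_cv a L /\ Un_cv b L.
Proof.
  intros Ha Hb He Ht.
  assert (H1 : forall N M, Rabs (a N - T N M) <= eps M).
  { intros N M. apply (lim_le (fun M' => T N M' - T N M) _ _ M).
    - apply CV_minus. apply Ha. intros e he; exists 0%nat; intros; unfold R_dist; rewrite Rminus_diag, Rabs_R0; lra.
    - intros n Hn. apply Ht; auto. }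
  assert (Hc : Cauchy_crit a).
  { intros e he. destruct (He (e / 4) ltac:(lra)) as [M HM]. specialize (HM M (le_n _)).
    unfold R_dist in HM. rewrite Rminus_0_r in HM.
    destruct (Hb M (e / 4) ltac:(lra)) as [N0 HN0].
    exists N0. intros n m Hn Hm. unfold R_dist in *.
    pose proof (H1 n M). pose proof (H1 m M). pose proof (HN0 n Hn). pose proof (HN0 m Hm).
    pose proof (Rle_abs (eps M)).
    replace (a n - a m) with ((a n - T n M) + (T n M - b M) - (T m M - b M) - (a m - T m M)) by ring.
    assert (Rabs ((a n - T n M) + (T n M - b M) - (T m M - b M) - (a m - T m M)) <=
      Rabs (a n - T n M) + Rabs (T n M - b M) + Rabs (T m M - b M) + Rabs (a m - T m M)).
    { generalize (a n - T n M) (T n M - b M) (T m M - b M) (a m - T m M). intros x1 x2 x3 x4.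
      unfold Rabs; repeat destruct Rcase_abs; lra. }
    lra. }
  destruct (Rcomplete.R_complete a Hc) as [L HL].
  exists L. split; auto.
  assert (H2 : forall M, Rabs (L - b M) <= eps M).
  { intro M. apply (lim_le (fun N => a N - T N M) _ _ 0). apply CV_minus; auto. intros; apply H1. }
  intros e he. destruct (He e he) as [M0 HM0]. exists M0. intros M HM.
  specialize (HM0 M HM). specialize (H2 M). unfold R_dist in *. rewrite Rminus_0_r in HM0.
  rewrite <- Rabs_Ropp. replace (- (b M - L)) with (L - b M) by ring. pose proof (Rle_abs (eps M)). lra.
Qed.

Lemma alt_tail_aux (a : nat -> R) : (forall m, 0 <= a m) -> (forall m, a (S m) <= a m) ->
  forall q M, 0 <= (-1) ^ (S M) * (ssum (fun m => (-1) ^ m * a m) (M + q) - ssum (fun m => (-1) ^ m * a m) M) <= a (S M).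
Proof.
  intros H0 H1 q. induction q; intros M.
  - rewrite Nat.add_0_r. rewrite Rminus_diag, Rmult_0_r. split; [lra|apply H0].
  - rewrite <- Nat.add_succ_comm. specialize (IHq (S M)).
    set (t := fun m => (-1) ^ m * a m) in *.
    replace (ssum t (S M + q) - ssum t M) with (t (S M) + (ssum t (S M + q) - ssum t (S M))) by (rewrite ssum_S; ring).
    set (D := ssum t (S M + q) - ssum t (S M)) in *.
    assert (Hs : (-1) ^ S M * (-1) ^ S M = 1) by (rewrite <- pow_add; replace (S M + S M)%nat with (2 * S M)%nat by lia; rewrite pow_mult; replace ((-1)^2) with 1 by ring; apply pow1).
    assert (Hs2 : (-1) ^ S (S M) = - (-1) ^ S M) by (simpl; ring).
    rewrite Hs2 in IHq. unfold t.
    replace ((-1) ^ S M * ((-1) ^ S M * a (S M) + D)) with (a (S M) - (- (-1) ^ S M * D)) by (rewrite Rmult_plus_distr_l, <- Rmult_assoc, Hs; ring).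
    specialize (H1 (S M)). lra.
Qed.

Lemma alt_tail (a : nat -> R) M M' : (forall m, 0 <= a m) -> (forall m, a (S m) <= a m) -> (M <= M')%nat ->
  Rabs (ssum (fun m => (-1) ^ m * a m) M' - ssum (fun m => (-1) ^ m * a m) M) <= a (S M).
Proof.
  intros H0 H1 HM. replace M' with (M + (M' - M))%nat by lia.
  pose proof (alt_tail_aux a H0 H1 (M' - M) M) as K.
  set (D := ssum (fun m => (-1) ^ m * a m) (M + (M' - M)) - ssum (fun m => (-1) ^ m * a m) M) in *.
  replace D with ((-1) ^ S M * ((-1) ^ S M * D)).
  rewrite Rabs_mult, pow_1_abs, Rmult_1_l, Rabs_pos_eq; lra.
  rewrite <- Rmult_assoc, <- pow_add. replace (S M + S M)%nat with (2 * S M)%nat by lia. rewrite pow_mult. replace ((-1)^2) with 1 by ring. rewrite pow1. ring.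
Qed.

Definition cc (alpha : R) (n : Z) : R := alpha * (-1) ^ (Z.abs_nat n) / PI.
Definition An (alpha beta : R) (n : Z) : R := alpha ^ 2 * IZR n ^ 2 + alpha * beta ^ 2.
Definition gg (alpha beta : R) (n m : Z) : R := cc alpha n * gP (An alpha beta n) m.

Lemma An_pos alpha beta n : 0 < alpha -> 0 < beta -> 0 < An alpha beta n.
Proof.
  intros Ha Hb. unfold An. assert (0 <= IZR n ^ 2) by (simpl; nra).
  assert (0 < alpha ^ 2) by (apply pow_lt; lra). assert (0 < beta ^ 2) by (apply pow_lt; lra). nra.
Qed.

Lemma cv_const_mul (u : nat -> R) l c : Un_cv u l -> Un_cv (fun n => c * u n) (c * l).
Proof.
  intros H. apply CV_mult; auto. intros e he. exists 0%nat. intros. unfold R_dist. rewrite Rminus_diag, Rabs_R0. lra.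
Qed.

Lemma fterm_lim alpha beta n : 0 < alpha -> 0 < beta ->
  Un_cv (fun M => symsum (gg alpha beta n) M) (fterm alpha beta n).
Proof.
  intros Ha Hb.
  assert (E : forall M, symsum (gg alpha beta n) M = cc alpha n * symsum (gP (An alpha beta n)) M).
  { intro M. rewrite <- symsum_scal. reflexivity. }
  pose proof (An_pos alpha beta n Ha Hb) as HA.
  pose proof (cv_const_mul _ _ (cc alpha n) (P_cv _ HA)) as K.
  eapply Un_cv_ext. intro M; symmetry; apply E.
  replace (fterm alpha beta n) with (cc alpha n * (PI / (sqrt (An alpha beta n) * sinh (PI * sqrt (An alpha beta n))))).
  exact K.
  unfold fterm, cc, An. cbv zeta.
  assert (Hs : 0 < sqrt (alpha ^ 2 * IZR n ^ 2 + alpha * beta ^ 2)) by (apply sqrt_lt_R0; apply HA).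
  assert (0 < sinh (PI * sqrt (alpha ^ 2 * IZR n ^ 2 + alpha * beta ^ 2))).
  { rewrite <- sinh_0. apply sinh_lt. pose proof PI_RGT_0. nra. }
  pose proof PI_RGT_0. field. split; [|split]; lra.
Qed.

Lemma gg_tail alpha beta n M M' : 0 < alpha -> 0 < beta -> (M <= M')%nat ->
  Rabs (symsum (gg alpha beta n) M' - symsum (gg alpha beta n) M) <=
  (2 * alpha / PI) / (alpha ^ 2 * IZR n ^ 2 + INR (S M) ^ 2).
Proof.
  intros Ha Hb HM. pose proof (An_pos alpha beta n Ha Hb) as HA.
  set (A := An alpha beta n) in *.
  set (a := fun m : nat => 1 / (A + INR m ^ 2)).
  assert (E : forall K, symsum (gg alpha beta n) K = cc alpha n * (gP A 0 + 2 * ssum (fun m => (-1) ^ m * a m) K)).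
  { intro K. unfold gg. rewrite symsum_scal. fold A. rewrite symsum_even by apply gP_even. f_equal. f_equal. f_equal.
    apply ssum_ext. intro m. unfold gP, a. rewrite Zabs2Nat.id, <- INR_IZR_INZ. unfold Rdiv. rewrite Rmult_1_l. reflexivity. }
  rewrite !E.
  replace (cc alpha n * (gP A 0 + 2 * ssum (fun m : nat => (-1) ^ m * a m) M') -
     cc alpha n * (gP A 0 + 2 * ssum (fun m : nat => (-1) ^ m * a m) M))
    with (cc alpha n * 2 * (ssum (fun m : nat => (-1) ^ m * a m) M' - ssum (fun m : nat => (-1) ^ m * a m) M)) by ring.
  assert (Ha0 : forall m, 0 <= a m).
  { intro m. unfold a. pose proof (pos_INR m). left. apply Rdiv_lt_0_compat. lra. simpl; nra. }
  assert (Ha1 : forall m, a (S m) <= a m).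
  { intro m. unfold a. rewrite S_INR. pose proof (pos_INR m). unfold Rdiv. apply Rmult_le_compat_l. lra.
    apply Rinv_le_contravar. simpl; nra. simpl; nra. }
  pose proof (alt_tail a M M' Ha0 Ha1 HM) as K.
  pose proof PI_RGT_0.
  assert (Hcc : Rabs (cc alpha n * 2) = 2 * alpha / PI).
  { unfold cc. rewrite Rabs_mult, (Rabs_pos_eq 2) by lra. unfold Rdiv. rewrite Rabs_mult, Rabs_mult, pow_1_abs.
    rewrite Rabs_pos_eq by lra. rewrite Rabs_pos_eq. ring. left; apply Rinv_0_lt_compat; lra. }
  rewrite Rabs_mult, Hcc.
  assert (0 < 2 * alpha / PI) by (apply Rdiv_lt_0_compat; lra).
  apply Rle_trans with (2 * alpha / PI * a (S M)). apply Rmult_le_compat_l; lra.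
  unfold a. unfold Rdiv at 2 3. rewrite Rmult_1_l. apply Rmult_le_compat_l. lra.
  assert (0 < INR (S M)) by (apply lt_0_INR; lia).
  apply Rinv_le_contravar. assert (0 <= IZR n ^ 2) by (simpl; nra). assert (0 < alpha ^ 2) by (apply pow_lt; lra). simpl in *; nra.
  unfold A, An. assert (0 < beta ^ 2) by (apply pow_lt; lra). nra.
Qed.

Lemma sum_bound alpha J N : 0 < alpha -> (1 <= J)%nat ->
  symsum (fun n => 1 / (alpha ^ 2 * IZR n ^ 2 + INR J ^ 2)) N <= 3 / INR J + 2 / (alpha ^ 2 * INR J).
Proof.
  intros Ha HJ.
  assert (HJR : 1 <= INR J) by (apply (le_INR 1); lia).
  assert (Ha2 : 0 < alpha ^ 2) by (apply pow_lt; lra).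
  rewrite symsum_even.
  2:{ intro n. rewrite opp_IZR. f_equal. f_equal. f_equal. ring. }
  assert (H0 : 1 / (alpha ^ 2 * IZR 0 ^ 2 + INR J ^ 2) <= 1 / INR J).
  { simpl. unfold Rdiv. rewrite !Rmult_1_l. apply Rinv_le_contravar. lra. nra. }
  assert (H1 := ssum_split (fun n => 1 / (alpha ^ 2 * IZR (Z.of_nat n) ^ 2 + INR J ^ 2)) (1 / INR J ^ 2) (1 / alpha ^ 2) J HJ).
  assert (Hx : 0 <= 1 / INR J ^ 2) by (unfold Rdiv; rewrite Rmult_1_l; left; apply Rinv_0_lt_compat; simpl; nra).
  assert (Hy : 0 <= 1 / alpha ^ 2) by (unfold Rdiv; rewrite Rmult_1_l; left; apply Rinv_0_lt_compat; lra).
  specialize (H1 Hx Hy).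
  assert (H2 : ssum (fun n => 1 / (alpha ^ 2 * IZR (Z.of_nat n) ^ 2 + INR J ^ 2)) N <= 1 / INR J ^ 2 * INR J + 1 / alpha ^ 2 / INR J).
  { apply H1.
    - intros n _. rewrite <- INR_IZR_INZ. unfold Rdiv; rewrite !Rmult_1_l. apply Rinv_le_contravar. simpl; nra.
      assert (0 <= alpha ^ 2 * INR n ^ 2) by (apply Rmult_le_pos; [lra| simpl; pose proof (pos_INR n); nra]). lra.
    - intros n Hn. rewrite <- INR_IZR_INZ. assert (1 <= INR n) by (apply (le_INR 1); lia).
      unfold Rdiv; rewrite !Rmult_1_l. rewrite <- (Rinv_mult (alpha ^ 2) (INR n ^ 2)). apply Rinv_le_contravar.
      assert (0 < INR n ^ 2) by (simpl; nra). apply Rmult_lt_0_compat; lra.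
      assert (0 < INR J ^ 2) by (simpl; nra). lra. }
  replace (1 / INR J ^ 2 * INR J + 1 / alpha ^ 2 / INR J) with (1 / INR J + 1 / (alpha ^ 2 * INR J)) in H2 by (field; lra).
  replace (3 / INR J + 2 / (alpha ^ 2 * INR J)) with (1 / INR J + 2 * (1 / INR J + 1 / (alpha ^ 2 * INR J))) by (field; lra).
  lra.
Qed.

Lemma cv_inv D : Un_cv (fun M => D / INR (S M)) 0.
Proof.
  intros e he. destruct (archimed_cor1 (e / (Rabs D + 1)) ltac:(apply Rdiv_lt_0_compat; [lra| pose proof (Rabs_pos D); lra])) as [N [HN1 HN2]].
  exists N. intros n Hn. unfold R_dist. rewrite Rminus_0_r.
  assert (HnR : INR N <= INR (S n)) by (apply le_INR; lia).
  assert (0 < INR N) by (apply lt_0_INR; lia).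
  unfold Rdiv. rewrite Rabs_mult, (Rabs_pos_eq (/ INR (S n))) by (left; apply Rinv_0_lt_compat; lra).
  assert (/ INR (S n) <= / INR N) by (apply Rinv_le_contravar; lra).
  assert (HD : 0 <= Rabs D) by apply Rabs_pos.
  assert (/ INR N * (Rabs D + 1) < e).
  { apply Rmult_lt_reg_r with (/ (Rabs D + 1)). apply Rinv_0_lt_compat; lra.
    replace (/ INR N * (Rabs D + 1) * / (Rabs D + 1)) with (/ INR N) by (field; lra). exact HN1. }
  assert (0 <= / INR (S n)) by (left; apply Rinv_0_lt_compat; lra).
  nra.
Qed.

Lemma gg_sym alpha beta n m : 0 < alpha -> 0 < beta -> gg alpha beta n m = gg (/ alpha) beta m n.
Proof.
  intros Ha Hb. unfold gg, cc, gP, An. pose proof PI_RGT_0.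
  assert (0 <= IZR n ^ 2) by (simpl; nra). assert (0 <= IZR m ^ 2) by (simpl; nra).
  assert (0 < beta ^ 2) by (apply pow_lt; lra).
  assert (0 < alpha ^ 2) by (apply pow_lt; lra).
  assert (0 <= alpha ^ 2 * IZR n ^ 2) by (apply Rmult_le_pos; lra).
  assert (0 < alpha * beta ^ 2) by (apply Rmult_lt_0_compat; lra).
  assert (0 < alpha ^ 2 * IZR n ^ 2 + alpha * beta ^ 2 + IZR m ^ 2) by lra.
  assert (E : (/ alpha) ^ 2 * IZR m ^ 2 + / alpha * beta ^ 2 + IZR n ^ 2 =
     (alpha ^ 2 * IZR n ^ 2 + alpha * beta ^ 2 + IZR m ^ 2) / alpha ^ 2) by (field; lra).
  rewrite E. field. repeat split; lra.
Qed.

Theorem mainTheorem1 (alpha beta : R) (Ha : 0 < alpha) (Hb : 0 < beta) :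
  exists l : R,
    bilateral_sum (fterm alpha beta) l /\
    bilateral_sum (fterm (/ alpha) beta) l.
Proof.
  assert (Hia : 0 < / alpha) by (apply Rinv_0_lt_compat; auto).
  set (T := fun N M => symsum (fun n => symsum (gg alpha beta n) M) N).
  set (D := 2 * alpha / PI * (3 + 2 / alpha ^ 2)).
  destruct (moore_osgood T (symsum (fterm alpha beta)) (symsum (fterm (/ alpha) beta)) (fun M => D / INR (S M)))
    as [L [H1 H2]].
  - intro N. unfold T. apply (symsum_lim (fun n M => symsum (gg alpha beta n) M)).
    intro n. apply fterm_lim; auto.
  - intro M.
    apply (Un_cv_ext (fun N => symsum (fun m => symsum (gg (/ alpha) beta m) N) M)).
    { intro N. unfold T. symmetry.
      transitivity (symsum (fun m => symsum (fun n => gg alpha beta n m) N) M).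
      exact (symsum_swap (gg alpha beta) N M).
      apply symsum_ext; intro m; apply symsum_ext; intro n; apply gg_sym; auto. }
    apply (symsum_lim (fun m N => symsum (gg (/ alpha) beta m) N)).
    intro m. apply fterm_lim; auto.
  - apply cv_inv.
  - intros N M M' HM. unfold T. rewrite <- symsum_minus.
    eapply Rle_trans. apply symsum_abs. intro n. apply (gg_tail alpha beta n M M' Ha Hb HM).
    pose proof PI_RGT_0.
    assert (HK : 0 < 2 * alpha / PI) by (apply Rdiv_lt_0_compat; lra).
    rewrite (symsum_ext _ (fun n => 2 * alpha / PI * (1 / (alpha ^ 2 * IZR n ^ 2 + INR (S M) ^ 2)))) by (intro; unfold Rdiv; ring).
    rewrite symsum_scal.
    eapply Rle_trans. apply Rmult_le_compat_l. lra. apply sum_bound; auto. lia.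
    unfold D. right. assert (INR (S M) <> 0) by (apply not_0_INR; lia). field. repeat split; lra.
  - exists L. split; auto.
Qed.
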